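(* Let $\mathcal{M}=\langle S,\iota,\mathsf{Act},P,\mathsf{Z},\mathsf{obs}\rangle$ be an MDP and $r\colon S\to\mathbb{R}_{\ge0}$. For every trace $\tau\in\mathsf{Z}^+$, $R_r(\tau)=\max_{\sigma\in\Sigma_{\mathrm{DC}}(|\tau|)}\sum_{\pi\in\mathrm{Paths}(\tau)}\Pr^\sigma(\pi\mid\tau)\cdot r(\mathrm{last}(\pi))$.
   Context: An MDP is a tuple $\langle S,\iota,\mathsf{Act},P,\mathsf{Z},\mathsf{obs}\rangle$: finite state set $S$, initial distribution $\iota\in\mathsf{Distr}(S)$, finite action set $\mathsf{Act}$, partial transition function $P\colon S\times\mathsf{Act}\rightharpoonup\mathsf{Distr}(S)$, finite observation set $\mathsf{Z}$, observation function $\mathsf{obs}\colon S\to\mathsf{Distr}(\mathsf{Z})$; $\mathsf{AvAct}(s)=\{\alpha\mid P(s,\alpha)\text{ defined}\}\neq\emptyset$. A finite path is $\pi=s_0a_0\dots a_{n-1}s_n$ with $\iota(s_0)>0$, $P(s_i,a_i)(s_{i+1})>0$; its length $|\pi|=n$ is its number of actions; $\mathrm{last}(\pi)=s_n$. A scheduler $\sigma$ maps each finite path $\pi$ to a distribution on $\mathsf{AvAct}(\mathrm{last}(\pi))$; $\Sigma$ is the set of schedulers; $\Pr^\sigma(\pi)=\iota(s_0)\prod_{i<n}\sigma(s_0a_0\dots s_i)(a_i)P(s_i,a_i)(s_{i+1})$. For a trace $\tau=z_0\dots z_n$ (length $|\tau|$) and path $\pi=s_0\dots s_m$, $\Pr(\tau\mid\pi)=\prod_{i=0}^n\mathsf{obs}(s_i)(z_i)$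 if $m=n$, else $0$; $\mathrm{Paths}(\tau)$ are the paths with as many states as $\tau$ has observations; $\Pr^\sigma(\tau)=\sum_\pi\Pr^\sigma(\pi)\Pr(\tau\mid\pi)$; $\Pr^\sigma(\pi\mid\tau)=\Pr(\tau\mid\pi)\Pr^\sigma(\pi)/\Pr^\sigma(\tau)$ ($0/0=0$). $R_r(\tau)=\sup_{\sigma\in\Sigma}\sum_{\pi\in\mathrm{Paths}(\tau)}\Pr^\sigma(\pi\mid\tau)r(\mathrm{last}(\pi))$. For $k\in\mathbb{N}$, $\Sigma_{\mathrm{DC}}(k)$ is the set of deterministic schedulers (each $\sigma(\pi)$ is Dirac) such that for all finite paths $\pi,\pi'$: if $\mathrm{last}(\pi)=\mathrm{last}(\pi')$ and ($|\pi|=|\pi'|$ or ($|\pi|>k$ and $|\pi'|>k$)), then $\sigma(\pi)=\sigma(\pi')$. *)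

(* Defs.v *)
From HB Require Import structures.
From mathcomp Require Import all_boot all_order all_algebra.
From mathcomp Require Import classical_sets reals.
Set Implicit Arguments. Unset Strict Implicit. Unset Printing Implicit Defensive.
Import Order.TTheory GRing.Theory Num.Theory.
Local Open Scope ring_scope.

Section MDP.
Variables (R : realType) (S Act Z : finType).

Definition is_distr (T : finType) (d : T -> R) : Prop :=
  (forall t, 0 <= d t) /\ \sum_(t : T) d t = 1.

(* An MDP <S, iota, Act, P, Z, obs>: the partial transition function is
   [P : S -> Act -> option (S -> R)] (None = undefined). *)
Definition is_mdp (iota : S -> R) (P : S -> Act -> option (S -> R))
    (obs : S -> Z -> R) : Prop :=
  [/\ is_distr iota,
      (forall s a d, P s a = Some d -> is_distr d),
      (forall s, is_distr (obs s)) &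
      (forall s, exists a, P s a <> None)].

Variables (iota : S -> R) (P : S -> Act -> option (S -> R)) (obs : S -> Z -> R).

Definition avail (s : S) (a : Act) : bool := if P s a is Some _ then true else false.

(* P(s,a)(s'), taken to be 0 when P(s,a) is undefined *)
Definition trans (s : S) (a : Act) (s' : S) : R :=
  if P s a is Some d then d s' else 0.

(* A finite sequence s_0 a_0 s_1 ... a_{n-1} s_n, stored as (s_0, [(a_0,s_1);...]) *)
Definition fseq := (S * seq (Act * S))%type.

Definition flen (p : fseq) : nat := size p.2.
Definition flast (p : fseq) : S := last p.1 (map snd p.2).
Definition fstates (p : fseq) : seq S := p.1 :: map snd p.2.

Fixpoint steps_ok (s : S) (t : seq (Act * S)) : bool :=
  if t is (a, s') :: t' then (0 < trans s a s') && steps_ok s' t' else true.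

Definition is_path (p : fseq) : bool := (0 < iota p.1) && steps_ok p.1 p.2.

Definition sched := fseq -> Act -> R.

Definition is_sched (sigma : sched) : Prop :=
  forall p, is_path p ->
    is_distr (sigma p) /\ (forall a, 0 < sigma p a -> avail (flast p) a).

Fixpoint pr_aux (sigma : sched) (s0 : S) (pre : seq (Act * S)) (s : S)
    (t : seq (Act * S)) : R :=
  if t is (a, s') :: t' then
    sigma (s0, pre) a * trans s a s' * pr_aux sigma s0 (rcons pre (a, s')) s' t'
  else 1.

Definition pr_path (sigma : sched) (p : fseq) : R :=
  iota p.1 * pr_aux sigma p.1 [::] p.1 p.2.

Fixpoint obs_pr (ss : seq S) (zs : seq Z) : R :=
  match ss, zs with
  | [::], [::] => 1
  | s :: ss', z :: zs' => obs s z * obs_pr ss' zs'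
  | _, _ => 0
  end.

Definition pr_obs (tau : seq Z) (p : fseq) : R := obs_pr (fstates p) tau.

(* sum over Paths(tau): the paths with as many states as tau has observations *)
Definition sum_paths (tau : seq Z) (F : fseq -> R) : R :=
  \sum_(s0 : S) \sum_(t : ((size tau).-1).-tuple (Act * S) | is_path (s0, val t))
     F (s0, val t).

Definition pr_trace (sigma : sched) (tau : seq Z) : R :=
  sum_paths tau (fun p => pr_path sigma p * pr_obs tau p).

(* Pr^sigma(pi | tau); note x / 0 = 0 in MathComp *)
Definition pr_cond (sigma : sched) (tau : seq Z) (p : fseq) : R :=
  pr_obs tau p * pr_path sigma p / pr_trace sigma tau.

Definition cond_reward (r : S -> R) (sigma : sched) (tau : seq Z) : R :=
  sum_paths tau (fun p => pr_cond sigma tau p * r (flast p)).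

Definition Rr (r : S -> R) (tau : seq Z) : R :=
  sup [set v | exists sigma, is_sched sigma /\ v = cond_reward r sigma tau].

Definition is_dc_sched (k : nat) (sigma : sched) : Prop :=
  [/\ is_sched sigma,
      (forall p, is_path p -> exists a, forall b, sigma p b = if b == a then 1 else 0) &
      (forall p p', is_path p -> is_path p' -> flast p = flast p' ->
         (flen p = flen p' \/ (k < flen p /\ k < flen p')%N) ->
         sigma p = sigma p')].

(* |tau| for tau = z_0 ... z_n is n (number of transitions, as for paths) *)
Definition tlen (tau : seq Z) : nat := (size tau).-1.

End MDP.

(* Main.v *)
Require Import Defs.
From HB Require Import structures.
From mathcomp Require Import all_boot all_order all_algebra.
From mathcomp Require Import classical_sets reals.
From mathcomp Require Import ring lra.
Set Implicit Arguments. Unset Strict Implicit. Unset Printing Implicit Defensive.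
Import Order.TTheory GRing.Theory Num.Theory.
Local Open Scope ring_scope.

Lemma sum_tuple_cons (R : realType) (T : finType) m (Pp : pred (seq T)) (F : seq T -> R) :
  \sum_(t : m.+1.-tuple T | Pp t) F t =
  \sum_(x : T) \sum_(t : m.-tuple T | Pp (x :: t)) F (x :: t).
Proof.
rewrite pair_big_dep /=.
rewrite (reindex (fun p : T * m.-tuple T => [tuple of p.1 :: p.2])) /=.
  by apply: eq_bigl => -[x t].
exists (fun t : m.+1.-tuple T => (thead t, [tuple of behead t])).
  by move=> [x t] _ /=; rewrite theadE; congr pair; apply: val_inj.
by move=> t _ /=; rewrite [RHS]tuple_eta.
Qed.

Lemma sum_tuple0 (R : realType) (T : finType) (Pp : pred (seq T)) (F : seq T -> R) :
  \sum_(t : 0.-tuple T | Pp t) F t = if Pp [::] then F [::] else 0.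
Proof.
rewrite big_mkcond (big_pred1 [tuple]) //.
by move=> t; rewrite [t]tuple0 /= eqxx.
Qed.

Section Helpers.
Variables (R : realType) (S Act Z : finType) (iota : S -> R)
    (P : S -> Act -> option (S -> R)) (obs : S -> Z -> R).

Definition Qs (sigma : sched R S Act) (f : S -> R) (s0 : S) (pre : seq (Act * S)) (s : S) (zs : seq Z) : R :=
  \sum_(t : (size zs).-tuple (Act * S) | steps_ok P s t)
     pr_aux P sigma s0 pre s t * obs_pr obs (map snd t) zs * f (last s (map snd t)).

Lemma Qs_nil sigma f s0 pre s : Qs sigma f s0 pre s [::] = f s.
Proof.
rewrite /Qs; have := @sum_tuple0 R (Act * S)%type (steps_ok P s)
  (fun t => pr_aux P sigma s0 pre s t * obs_pr obs [seq i.2 | i <- t] [::] * f (last s [seq i.2 | i <- t])).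
by move=> ->; rewrite /= !mul1r.
Qed.

Lemma Qs_cons sigma f s0 pre s z zs :
  Qs sigma f s0 pre s (z :: zs) =
  \sum_(a : Act) \sum_(s' : S)
    (if 0 < trans P s a s' then
      sigma (s0, pre) a * trans P s a s' * obs s' z * Qs sigma f s0 (rcons pre (a, s')) s' zs
     else 0).
Proof.
rewrite /Qs.
have := @sum_tuple_cons R (Act * S)%type (size zs) (steps_ok P s)
  (fun t => pr_aux P sigma s0 pre s t * obs_pr obs [seq i.2 | i <- t] (z :: zs) * f (last s [seq i.2 | i <- t])).
move=> ->; rewrite pair_big /=.
apply: eq_bigr => -[a s'] _ /=.
case: ifP => h /=; last by rewrite big_pred0.
rewrite big_distrr /=; apply: eq_bigr => t _.
ring.
Qed.


Hypothesis HM : is_mdp iota P obs.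

Lemma iota_ge0 s : 0 <= iota s.
Proof. by case: HM => -[h _] _ _ _. Qed.

Lemma obs_ge0 s z : 0 <= obs s z.
Proof. by case: HM => _ _ h _; case: (h s) => h1 _. Qed.

Lemma trans_ge0 s a s' : 0 <= trans P s a s'.
Proof.
rewrite /trans; case E: (P s a) => [d|] //.
by case: HM => _ h _ _; case: (h _ _ _ E) => h1 _.
Qed.

Lemma iota0 s : ~~ (0 < iota s) -> iota s = 0.
Proof. by move=> h; apply/eqP; rewrite eq_le iota_ge0 andbT leNgt. Qed.

Lemma trans0 s a s' : ~~ (0 < trans P s a s') -> trans P s a s' = 0.
Proof. by move=> h; apply/eqP; rewrite eq_le trans_ge0 andbT leNgt. Qed.

Lemma steps_ok_rcons s pre a s' :
  steps_ok P s (rcons pre (a, s')) =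
  steps_ok P s pre && (0 < trans P (last s (map snd pre)) a s').
Proof.
elim: pre s => [|[b x] pre IH] s /=; first by rewrite andbT.
by rewrite IH andbA.
Qed.

Lemma flast_rcons (s0 : S) (pre : seq (Act * S)) a s' : flast (s0, rcons pre (a, s')) = s'.
Proof. by rewrite /flast /= map_rcons last_rcons. Qed.

Lemma path_rcons s0 pre a s' :
  is_path iota P (s0, pre) -> 0 < trans P (flast (s0, pre)) a s' ->
  is_path iota P (s0, rcons pre (a, s')).
Proof.
by rewrite /is_path /= steps_ok_rcons => /andP[-> ->] ->.
Qed.

Lemma Qs_ge0 sigma f s0 zs : is_sched iota P sigma -> (forall s, 0 <= f s) ->
  forall pre, is_path iota P (s0, pre) -> 0 <= Qs sigma f s0 pre (flast (s0, pre)) zs.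
Proof.
move=> hs hf; elim: zs => [|z zs IH] pre hp; first by rewrite Qs_nil.
rewrite Qs_cons; apply: sumr_ge0 => a _; apply: sumr_ge0 => s' _.
case: ifP => // htr.
have := IH _ (path_rcons hp htr); rewrite flast_rcons => h.
case: (hs _ hp) => -[h1 _] _.
by rewrite !mulr_ge0 // ?obs_ge0 // ltW.
Qed.


Variable a0 : S -> Act.
Hypothesis Ha0 : forall s, avail P s (a0 s).

Definition gsc (W : S -> R) (z : Z) (s : S) (a : Act) : R :=
  \sum_(s' : S) trans P s a s' * obs s' z * W s'.

Definition best (g : Act -> R) (s : S) : Act :=
  [arg max_(a > a0 s | avail P s a) g a]%O.

Lemma best_avail g s : avail P s (best g s).
Proof. by rewrite /best; case: (arg_maxP g (Ha0 s)). Qed.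

Lemma best_max g s a : avail P s a -> g a <= g (best g s).
Proof. by rewrite /best; case: (arg_maxP g (Ha0 s)) => i _ h /h. Qed.

Fixpoint V (f : S -> R) (zs : seq Z) : S -> R :=
  match zs with
  | [::] => f
  | z :: zs' => fun s => gsc (V f zs') z s (best (gsc (V f zs') z s) s)
  end.

Lemma Qs_le sigma f s0 zs : is_sched iota P sigma ->
  forall pre, is_path iota P (s0, pre) ->
  Qs sigma f s0 pre (flast (s0, pre)) zs <= V f zs (flast (s0, pre)).
Proof.
move=> hs; elim: zs => [|z zs IH] pre hp; first by rewrite Qs_nil.
rewrite Qs_cons /=.
set s := flast (s0, pre).
set g := gsc (V f zs) z s.
case: (hs _ hp) => -[hge0 hsum] hav.
apply: (@le_trans _ _ (\sum_a sigma (s0, pre) a * g a)).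
  apply: ler_sum => a _; rewrite /g /gsc big_distrr; apply: ler_sum => s' _.
  case: ifP => htr.
    have := IH _ (path_rcons hp htr); rewrite flast_rcons => h.
    rewrite -!mulrA; apply: ler_wpM2l => //; apply: ler_wpM2l; first exact: trans_ge0.
    by apply: ler_wpM2l => //; exact: obs_ge0.
  by rewrite trans0 ?htr // !mul0r /= mulr0.
apply: (@le_trans _ _ (\sum_a sigma (s0, pre) a * g (best g s))).
  apply: ler_sum => a _.
  have := hge0 a; rewrite le_eqVlt => /orP[/eqP <-|hpos]; first by rewrite !mul0r.
  by apply: ler_wpM2l => //; apply: best_max; apply: hav.
by rewrite -mulr_suml hsum mul1r.
Qed.

Definition dirac (a : Act) : Act -> R := fun b => if b == a then 1 else 0.

Definition sched_of n (D : {ffun 'I_n.+1 * S -> Act}) : sched R S Act :=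
  fun h => dirac (D (inord (minn (flen h) n), flast h)).

Definition validD n (D : {ffun 'I_n.+1 * S -> Act}) := [forall x, avail P x.2 (D x)].

Lemma sum_dirac b (X : Act -> R) : \sum_a dirac b a * X a = X b.
Proof.
rewrite (bigD1 b) //= /dirac eqxx mul1r big1 ?addr0 // => a /negbTE ->.
by rewrite mul0r.
Qed.

Definition bestz (f : S -> R) (zs : seq Z) (s : S) : Act :=
  match zs with [::] => a0 s | z :: zs' => best (gsc (V f zs') z s) s end.

Definition Dbest (f : S -> R) (zs0 : seq Z) : {ffun 'I_(size zs0).+1 * S -> Act} :=
  [ffun x : 'I_(size zs0).+1 * S => bestz f (drop x.1 zs0) x.2].

Lemma Dbest_valid f zs0 : validD (Dbest f zs0).
Proof.
apply/forallP => -[i s]; rewrite ffunE /=.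
by case: (drop i zs0) => [|z zs] /=; [exact: Ha0 | exact: best_avail].
Qed.

Lemma drop_succ (T : Type) k (l : seq T) z zs : drop k l = z :: zs -> drop k.+1 l = zs.
Proof.
elim: l k => [|x l IH] [|k] //=; first by case=> _ ->; rewrite drop0.
exact: IH.
Qed.

Lemma drop_lt (T : Type) k (l : seq T) z zs : drop k l = z :: zs -> (k < size l)%N.
Proof. by move=> h; rewrite -subn_gt0 -size_drop h. Qed.

Lemma Qs_eq f zs0 s0 zs :
  forall pre, is_path iota P (s0, pre) -> drop (size pre) zs0 = zs ->
  Qs (sched_of (Dbest f zs0)) f s0 pre (flast (s0, pre)) zs = V f zs (flast (s0, pre)).
Proof.
elim: zs => [|z zs IH] pre hp hd; first by rewrite Qs_nil.
rewrite Qs_cons /=.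
set s := flast (s0, pre).
have hlt := drop_lt hd.
have -> : sched_of (Dbest f zs0) (s0, pre) = dirac (best (gsc (V f zs) z s) s).
  rewrite /sched_of ffunE /= /flen /=.
  by rewrite (minn_idPl (ltnW hlt)) inordK ?ltnS ?(ltnW hlt) // hd.
rewrite -(sum_dirac (best (gsc (V f zs) z s) s) (gsc (V f zs) z s)).
apply: eq_bigr => a _; rewrite /gsc big_distrr; apply: eq_bigr => s' _.
case: ifP => htr.
  have hd' : drop (size (rcons pre (a, s'))) zs0 = zs.
    by rewrite size_rcons; apply: drop_succ hd.
  have := IH _ (path_rcons hp htr) hd'; rewrite flast_rcons => ->.
  by rewrite /=; ring.
by rewrite trans0 ?htr // !mul0r /= mulr0.
Qed.


Lemma sched_of_dc n (D : {ffun 'I_n.+1 * S -> Act}) :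
  validD D -> is_dc_sched iota P n (sched_of D).
Proof.
move=> /forallP hv; split.
- move=> p _; split; first split.
  + by move=> a; rewrite /sched_of /dirac; case: ifP.
  + rewrite /sched_of (bigD1 (D (inord (minn (flen p) n), flast p))) //= /dirac eqxx.
    by rewrite big1 ?addr0 // => a /negbTE ->.
  + move=> a; rewrite /sched_of /dirac; case: ifP => [/eqP -> _|]; last by rewrite ltxx.
    exact: (hv (_, _)).
- by move=> p _; exists (D (inord (minn (flen p) n), flast p)).
- move=> p p' _ _ hl [hlen|[h1 h2]]; rewrite /sched_of hl ?hlen //.
  by rewrite (minn_idPr (ltnW h1)) (minn_idPr (ltnW h2)).
Qed.

Definition G (sigma : sched R S Act) (f : S -> R) (tau : seq Z) : R :=
  sum_paths iota P tau (fun p => pr_path iota P sigma p * pr_obs obs tau p * f (flast p)).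

Lemma Gconv sigma f z0 zs :
  G sigma f (z0 :: zs) = \sum_s0 iota s0 * obs s0 z0 * Qs sigma f s0 [::] s0 zs.
Proof.
rewrite /G /sum_paths; apply: eq_bigr => s0 _; rewrite /is_path /=.
case: (ltrP 0 (iota s0)) => h.
  rewrite /Qs big_distrr /=; apply: eq_bigr => t _.
  rewrite /pr_path /pr_obs /flast /fstates /=; ring.
have -> : iota s0 = 0 by apply/le_anti; rewrite h iota_ge0.
by rewrite big_pred0 // !mul0r.
Qed.

Lemma Glin sigma a b f g tau :
  G sigma (fun s => a * f s + b * g s) tau = a * G sigma f tau + b * G sigma g tau.
Proof.
rewrite /G /sum_paths !big_distrr -big_split; apply: eq_bigr => s0 _ /=.
rewrite !big_distrr -big_split; apply: eq_bigr => t _ /=; ring.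
Qed.

Lemma G_ext sigma f g tau : f =1 g -> G sigma f tau = G sigma g tau.
Proof.
move=> e; rewrite /G /sum_paths; apply: eq_bigr => s0 _; apply: eq_bigr => t _.
by rewrite e.
Qed.

Lemma cond_eq r sigma tau :
  cond_reward iota P obs r sigma tau = G sigma r tau / G sigma (fun=> 1) tau.
Proof.
have -> : G sigma (fun=> 1) tau = pr_trace iota P obs sigma tau.
  by rewrite /G /pr_trace /sum_paths; apply: eq_bigr => s0 _; apply: eq_bigr => t _; rewrite mulr1.
rewrite /cond_reward /G /sum_paths mulr_suml; apply: eq_bigr => s0 _.
rewrite mulr_suml; apply: eq_bigr => t _; rewrite /pr_cond; ring.
Qed.

Lemma G_ge0 sigma f z0 zs : is_sched iota P sigma -> (forall s, 0 <= f s) ->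
  0 <= G sigma f (z0 :: zs).
Proof.
move=> hs hf; rewrite Gconv; apply: sumr_ge0 => s0 _.
case: (ltrP 0 (iota s0)) => h.
  apply: mulr_ge0; first by rewrite mulr_ge0 ?obs_ge0 ?iota_ge0.
  have hp : is_path iota P (s0, [::]) by rewrite /is_path /= h.
  exact: (@Qs_ge0 sigma f s0 zs hs hf [::] hp).
have -> : iota s0 = 0 by apply/le_anti; rewrite h iota_ge0.
by rewrite !mul0r.
Qed.

Lemma Gopt sigma f z0 zs : is_sched iota P sigma ->
  G sigma f (z0 :: zs) <= G (sched_of (Dbest f zs)) f (z0 :: zs).
Proof.
move=> hs; rewrite !Gconv; apply: ler_sum => s0 _.
case: (boolP (0 < iota s0)) => h.
  have hp : is_path iota P (s0, [::]) by rewrite /is_path /= h.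
  have hc : 0 <= iota s0 * obs s0 z0 by rewrite mulr_ge0 ?obs_ge0 ?iota_ge0.
  apply: (ler_wpM2l hc).
  rewrite (@Qs_eq f zs s0 zs [::] hp) ?drop0 //.
  exact: (@Qs_le sigma f s0 zs hs [::] hp).
by rewrite iota0 // !mul0r.
Qed.

End Helpers.

Unset Implicit Arguments.

Theorem lemma8 (R : realType) (S Act Z : finType) (iota : S -> R)
    (P : S -> Act -> option (S -> R)) (obs : S -> Z -> R)
    (HM : is_mdp iota P obs) (r : S -> R) (hr : forall s, 0 <= r s)
    (tau : seq Z) (htau : (0 < size tau)%N) :
  (* the maximum over Sigma_DC(|tau|) exists and equals R_r(tau) *)
  exists2 sigma : sched R S Act, is_dc_sched iota P (tlen tau) sigma &
    cond_reward iota P obs r sigma tau = Rr iota P obs r tau /\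
    (forall sigma', is_dc_sched iota P (tlen tau) sigma' ->
       cond_reward iota P obs r sigma' tau <= cond_reward iota P obs r sigma tau).
Proof.
have ha : forall s, exists a, avail P s a.
  move=> s; case: HM => _ _ _ /(_ s) [a ha]; exists a.
  by rewrite /avail; case: (P s a) ha.
pose a0 s := sval (sigW (ha s)).
have Ha0 : forall s, avail P s (a0 s) by move=> s; exact: (svalP (sigW (ha s))).
case: tau htau => [//|z0 zs] _.
set tau := z0 :: zs.
pose cr (D : {ffun 'I_(size zs).+1 * S -> Act}) := cond_reward iota P obs r (sched_of R D) tau.
pose D0 := Dbest P obs a0 r zs.
have hD0 : validD P D0 by exact: Dbest_valid.
pose Ds := [arg max_(D > D0 | validD P D) cr D]%O.
have [hDs hmax] : validD P Ds /\ forall D, validD P D -> cr D <= cr Ds.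
  by rewrite /Ds; case: (arg_maxP cr hD0) => D h1 h2; split => // D' /h2.
set lam := cr Ds.
have cr_ge0 : forall sigma, is_sched iota P sigma -> 0 <= cond_reward iota P obs r sigma tau.
  move=> sigma hs; rewrite cond_eq; apply: divr_ge0; exact: G_ge0.
have hsDs : is_sched iota P (sched_of R Ds) by case: (sched_of_dc iota hDs).
have lam_ge0 : 0 <= lam by exact: cr_ge0.
pose M := \sum_s r s.
have rM : forall s, r s <= M.
  by move=> s; rewrite /M (bigD1 s) //= lerDl sumr_ge0.
have Gbound : forall sigma, is_sched iota P sigma ->
    G iota P obs sigma r tau <= M * G iota P obs sigma (fun=> 1) tau.
  move=> sigma hs; rewrite -subr_ge0.
  have := @G_ge0 R S Act Z iota P obs HM sigma (fun s => M * 1 + (-1) * r s) z0 zs hs.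
  rewrite Glin mulN1r => -> //.
  by move=> s; rewrite mulr1 mulN1r subr_ge0 rM.
have key : forall sigma, is_sched iota P sigma -> cond_reward iota P obs r sigma tau <= lam.
  move=> sigma hs; rewrite leNgt; apply/negP => hlt.
  pose f := fun s => 1 * r s + (- lam) * 1.
  pose Dl := Dbest P obs a0 f zs.
  have hDl : validD P Dl by exact: Dbest_valid.
  have hl := hmax Dl hDl.
  have hsl : is_sched iota P (sched_of R Dl) by case: (sched_of_dc iota hDl).
  have hopt := @Gopt _ _ _ _ iota P obs HM a0 Ha0 sigma f z0 zs hs.
  rewrite !Glin in hopt.
  rewrite /cr cond_eq in hl; rewrite cond_eq in hlt.
  have g1s := @G_ge0 R S Act Z iota P obs HM sigma (fun=> 1) z0 zs hs (fun=> ler01).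
  have g1l := @G_ge0 R S Act Z iota P obs HM (sched_of R Dl) (fun=> 1) z0 zs hsl (fun=> ler01).
  have gbl := Gbound _ hsl.
  move: hopt hl hlt g1s g1l gbl.
  rewrite -/tau -/Dl.
  set Gs := G iota P obs sigma r tau.
  set G1s := G iota P obs sigma (fun=> 1) tau.
  set Gl := G iota P obs (sched_of R Dl) r tau.
  set G1l := G iota P obs (sched_of R Dl) (fun=> 1) tau.
  move=> hopt hl hlt g1s g1l gbl.
  have G1s_pos : 0 < G1s.
    rewrite lt_def g1s andbT; apply/eqP => e.
    by move: hlt; rewrite e invr0 mulr0 ltNge lam_ge0.
  rewrite ltr_pdivlMr // in hlt.
  rewrite !mul1r !mulNr in hopt.
  have hpos : 0 < Gl - lam * G1l.
    apply: (lt_le_trans _ hopt); by rewrite subr_gt0.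
  have G1l_pos : 0 < G1l.
    rewrite lt_def g1l andbT; apply/eqP => e.
    move: gbl hpos; rewrite e !mulr0 subr0 => gbl hpos.
    by move: gbl; rewrite leNgt hpos.
  move: hl; rewrite ler_pdivrMr // => hl.
  move: hpos; rewrite subr_gt0 => hpos.
  have := lt_le_trans hpos hl.
  by rewrite -/lam ltxx.
exists (sched_of R Ds); first exact: sched_of_dc.
split; last by move=> s' [hs' _ _]; exact: key.
rewrite /Rr; apply/eqP; rewrite eq_le; apply/andP; split.
  apply: ub_le_sup; last by exists (sched_of R Ds).
  by exists lam => v [s [hs ->]]; exact: key.
apply: ge_sup; first by exists lam; exists (sched_of R Ds).
by move=> v [s [hs ->]]; exact: key.
Qed.
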